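(* Let $H$ be a 5-vertex 3-graph which is $C_5$-free and $J_4$-free, contains a copy of $K_4^3$, and has complete shadow graph. Then $H$ is isomorphic to the 3-graph $H_4$ with vertex set $[5]$ and edges $123,234,134,124,514,523$.
   Context: A 3-graph is a 3-uniform hypergraph. $K_4^3$ is the complete 3-graph on 4 vertices (edges $123,124,134,234$); $C_5$ has vertex set $[5]$ and edges $123,234,345,145,125$; $J_4$ has vertex set $[5]$ and edges $123,124,125,134,135,145$. $H$ is $F$-free if it has no (not necessarily induced) subhypergraph isomorphic to $F$. The shadow graph of $H$ is the graph on $V(H)$ in which a pair is an edge iff it is contained in some edge of $H$; it is complete if every pair of vertices is such an edge. *)

(* Defs.v *)
From mathcomp Require Import all_boot.
Set Implicit Arguments. Unset Strict Implicit. Unset Printing Implicit Defensive.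

Definition is_3graph (V : finType) (E : {set {set V}}) : Prop :=
  forall e, e \in E -> #|e| = 3.

(* F (on vertex set VF) is a (not necessarily induced) subhypergraph of H
   up to isomorphism: an injective vertex map sending edges of F to edges of H. *)
Definition contains_copy (VF V : finType) (F : {set {set VF}}) (E : {set {set V}}) : Prop :=
  exists f : VF -> V, injective f /\ forall e, e \in F -> f @: e \in E.

Definition free_of (VF V : finType) (F : {set {set VF}}) (E : {set {set V}}) : Prop :=
  ~ contains_copy F E.

Definition complete_shadow (V : finType) (E : {set {set V}}) : Prop :=
  forall x y : V, x != y -> exists2 e, e \in E & (x \in e) && (y \in e).

Definition hiso (V W : finType) (E : {set {set V}}) (F : {set {set W}}) : Prop :=
  exists f : V -> W, bijective f /\ forall e : {set V}, (e \in E) = (f @: e \in F).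

(* Vertices 1..5 of the paper are encoded as 0..4 of 'I_5. *)
Definition tr5 (a b c : nat) : {set 'I_5} := [set inord a.-1; inord b.-1; inord c.-1].

Definition K43 : {set {set 'I_4}} := [set e : {set 'I_4} | #|e| == 3].

Definition C5 : {set {set 'I_5}} :=
  [set tr5 1 2 3; tr5 2 3 4; tr5 3 4 5; tr5 1 4 5; tr5 1 2 5].

Definition J4 : {set {set 'I_5}} :=
  [set tr5 1 2 3; tr5 1 2 4; tr5 1 2 5; tr5 1 3 4; tr5 1 3 5; tr5 1 4 5].

Definition H4 : {set {set 'I_5}} :=
  [set tr5 1 2 3; tr5 2 3 4; tr5 1 3 4; tr5 1 2 4; tr5 5 1 4; tr5 5 2 3].

(* Main.v *)
Require Import Defs.
From mathcomp Require Import all_boot.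
From mathcomp Require Import zify.
Set Implicit Arguments. Unset Strict Implicit. Unset Printing Implicit Defensive.

Definition trcode (t : nat * nat * nat) : seq bool :=
  [seq (j == t.1.1.-1) || (j == t.1.2.-1) || (j == t.2.-1) | j <- iota 0 5].
Definition TL : seq (nat*nat*nat) :=
  [:: (1,2,3); (1,2,4); (1,3,4); (2,3,4); (1,2,5); (1,3,5); (1,4,5); (2,3,5); (2,4,5); (3,4,5)].
Definition C5L : seq (nat*nat*nat) := [:: (1,2,3); (2,3,4); (3,4,5); (1,4,5); (1,2,5)].
Definition J4L : seq (nat*nat*nat) := [:: (1,2,3); (1,2,4); (1,2,5); (1,3,4); (1,3,5); (1,4,5)].
Definition H4L : seq (nat*nat*nat) := [:: (1,2,3); (2,3,4); (1,3,4); (1,2,4); (5,1,4); (5,2,3)].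
Definition Tl := map trcode TL.
Definition memb (b c : seq bool) : bool := has (fun q => q.1 && (c == q.2)) (zip b Tl).
Definition cimg (p : seq nat) (c : seq bool) : seq bool :=
  [seq has (fun i => nth false c i && (nth 0 p i == j)) (iota 0 5) | j <- iota 0 5].
Definition perms := permutations (iota 0 5).
Definition checkK4 (b : seq bool) := [&& nth false b 0, nth false b 1, nth false b 2 & nth false b 3].
Definition checkSh (b : seq bool) := all (fun x => all (fun y => (x < y) ==>
   has (fun c => [&& memb b c, nth false c x & nth false c y]) Tl) (iota 0 5)) (iota 0 5).
Definition checkF (L : seq (nat*nat*nat)) (b : seq bool) :=
  all (fun p => ~~ all (fun c => memb b (cimg p c)) (map trcode L)) perms.
Fixpoint allb (n : nat) : seq (seq bool) :=
  if n is n'.+1 then [seq x :: s | x <- [:: true; false], s <- allb n'] else [:: [::]].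
Definition isoCheck (b : seq bool) (p : seq nat) :=
  all (fun c => memb b c == (cimg p c \in map trcode H4L)) (allb 5).
Definition bigcheck := all (fun b => if checkK4 b then if checkSh b then if checkF C5L b then
   if checkF J4L b then has (isoCheck b) perms else true else true else true else true) (allb 10).
Lemma bigcheckT : bigcheck = true.
Proof. vm_compute. reflexivity. Qed.

Definition code (e : {set 'I_5}) : seq bool := [seq (inord j : 'I_5) \in e | j <- iota 0 5].

Lemma nth_code e j : j < 5 -> nth false (code e) j = (inord j \in e).
Proof. by move=> hj; rewrite (nth_map 0) ?size_iota // nth_iota. Qed.

Lemma size_code e : size (code e) = 5.
Proof. by rewrite size_map size_iota. Qed.

Lemma code_inj : injective code.
Proof.
move=> e1 e2 h; apply/setP => i.
by have := congr1 (fun c => nth false c i) h; rewrite /= !nth_code ?ltn_ord // inord_val.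
Qed.

Lemma code_tri (x y z : 'I_5) :
  code [set x; y; z] = [seq (j == nat_of_ord x) || (j == nat_of_ord y) || (j == nat_of_ord z) | j <- iota 0 5].
Proof.
apply/eq_in_map => j; rewrite mem_iota add0n => /andP[_ hj].
by rewrite !inE -!(inj_eq val_inj) /= inordK.
Qed.

Definition setsOf (L : seq (nat * nat * nat)) := [seq tr5 t.1.1 t.1.2 t.2 | t <- L].
Definition okL (L : seq (nat * nat * nat)) :=
  all (fun t => [&& t.1.1.-1 < 5, t.1.2.-1 < 5 & t.2.-1 < 5]) L.

Lemma code_setsOf L : okL L -> map code (setsOf L) = map trcode L.
Proof.
elim: L => //= t L IH /andP[/and3P[h1 h2 h3] hL].
by rewrite IH // /tr5 code_tri !inordK.
Qed.

Definition Ts := setsOf TL.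

Lemma card3 (e : {set 'I_5}) : #|e| = 3 ->
  exists x y z : 'I_5, [/\ x != y, x != z, y != z & e = [set x; y; z]].
Proof.
move=> h. have : 0 < #|e| by rewrite h. case/card_gt0P => x xe.
have : #|e :\ x| == 2 by move: h; rewrite (cardsD1 x) xe add1n => -[->].
case/cards2P => y [z [yz exy]].
have : y \in e :\ x by rewrite exy !inE eqxx.
have : z \in e :\ x by rewrite exy !inE eqxx orbT.
rewrite !inE => /andP[zx _] /andP[yx _].
exists x, y, z; split => //; try by rewrite eq_sym.
rewrite -(setD1K xe) exy; apply/setP => w; by rewrite !inE orbA.
Qed.

Lemma tri_check : all (fun x => all (fun y => all (fun z =>
   [&& x != y, x != z & y != z] ==>
   ([seq (j == x) || (j == y) || (j == z) | j <- iota 0 5] \in Tl))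
   (iota 0 5)) (iota 0 5)) (iota 0 5).
Proof. vm_compute. reflexivity. Qed.

Lemma mem_iota5 (x : 'I_5) : val x \in iota 0 5.
Proof. by rewrite mem_iota leq0n add0n ltn_ord. Qed.

Lemma inTs (e : {set 'I_5}) : #|e| = 3 -> code e \in Tl.
Proof.
case/card3 => x [y [z [xy xz yz ->]]]; rewrite code_tri.
move/allP: tri_check => /(_ _ (mem_iota5 x)) /allP /(_ _ (mem_iota5 y))
  /allP /(_ _ (mem_iota5 z)) /implyP; apply.
by rewrite !(inj_eq val_inj) xy xz yz.
Qed.

Definition bv (E : {set {set 'I_5}}) := [seq t \in E | t <- Ts].

Lemma memE E : is_3graph E -> forall e, (e \in E) = memb (bv E) (code e).
Proof.
move=> h3 e; rewrite /memb /Tl -code_setsOf // /bv zip_map has_map.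
apply/idP/hasP => [eE|[t _ /andP[tE /eqP /code_inj ->]] //].
exists e; last by rewrite /preim /= eE eqxx.
by have := inTs (h3 _ eE); rewrite /Tl -code_setsOf // mem_map //; apply: code_inj.
Qed.

Lemma code_imset (f : 'I_5 -> 'I_5) (e : {set 'I_5}) :
  code (f @: e) = cimg [seq nat_of_ord (f (inord i)) | i <- iota 0 5] (code e).
Proof.
apply/eq_in_map => j; rewrite mem_iota add0n => /andP[_ hj].
apply/imsetP/hasP => [[x xe fx]|[i]].
- exists (val x); first exact: mem_iota5.
  rewrite nth_code ?ltn_ord // inord_val xe andTb (nth_map 0) ?size_iota ?ltn_ord //.
  by rewrite nth_iota ?ltn_ord // add0n inord_val -fx inordK.
- rewrite mem_iota add0n => /andP[_ hi] /andP[].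
  rewrite nth_code // (nth_map 0) ?size_iota // nth_iota // add0n => ie /eqP fi.
  by exists (inord i) => //; apply: val_inj; rewrite /= inordK.
Qed.

Definition fp (p : seq nat) (i : 'I_5) : 'I_5 := inord (nth 0 p i).

Lemma perm_props p : p \in perms ->
  [/\ uniq p, size p = 5 & forall i, i < 5 -> nth 0 p i < 5].
Proof.
rewrite mem_permutations => pe.
have hs : size p = 5 by rewrite (perm_size pe) size_iota.
split => //; first by rewrite (perm_uniq pe) iota_uniq.
move=> i hi; have : nth 0 p i \in iota 0 5 by rewrite -(perm_mem pe) mem_nth // hs.
by rewrite mem_iota add0n => /andP[].
Qed.

Lemma perm_inj p : p \in perms -> injective (fp p).
Proof.
case/perm_props => hu hs h5 x y /(congr1 val); rewrite /fp /= !inordK ?h5 ?ltn_ord //.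
by move/eqP; rewrite nth_uniq ?hs ?ltn_ord // => /eqP /val_inj.
Qed.

Lemma vals_fp p : p \in perms -> [seq nat_of_ord (fp p (inord i)) | i <- iota 0 5] = p.
Proof.
case/perm_props => hu hs h5.
transitivity (mkseq (nth 0 p) 5); last by rewrite -hs mkseq_nth.
apply/eq_in_map => i; rewrite mem_iota add0n => /andP[_ hi].
by rewrite /fp (inordK hi) inordK // h5.
Qed.

Lemma freeB (L : seq (nat*nat*nat)) (F : {set {set 'I_5}}) E :
  okL L -> (forall e, e \in F -> e \in setsOf L) ->
  is_3graph E -> free_of F E -> checkF L (bv E).
Proof.
move=> hL hF h3 hfree; apply/allP => p hp; apply/negP => /allP H.
apply: hfree; exists (fp p); split; first exact: perm_inj.
move=> e /hF he; rewrite memE // code_imset vals_fp //; apply: H.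
by rewrite -code_setsOf // map_f.
Qed.

Lemma shB E : is_3graph E -> complete_shadow E -> checkSh (bv E).
Proof.
move=> h3 hs; apply/allP => x; rewrite mem_iota add0n => /andP[_ hx].
apply/allP => y; rewrite mem_iota add0n => /andP[_ hy]; apply/implyP => xy.
have : (inord x : 'I_5) != inord y by rewrite -(inj_eq val_inj) /= !inordK // neq_ltn xy.
case/hs => e eE /andP[xe ye]; apply/hasP; exists (code e); first exact: inTs (h3 _ eE).
by rewrite -memE // eE !nth_code // xe ye.
Qed.

Lemma mem_allb n c : size c = n -> c \in allb n.
Proof.
elim: n c => [|n IH] [|x c] //= [hs].
have h := IH _ hs; by case: x; rewrite !mem_cat map_f ?orbT.
Qed.

Lemma memH4 e : (e \in H4) = (code e \in map trcode H4L).
Proof.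
rewrite -code_setsOf // (mem_map code_inj) /H4.
by rewrite !inE -!orbA.
Qed.

Lemma isoB E p : is_3graph E -> p \in perms -> isoCheck (bv E) p -> hiso E H4.
Proof.
move=> h3 hp /allP hc; exists (fp p); split; first exact: injF_bij (perm_inj hp).
move=> e; rewrite memE // memH4 code_imset vals_fp //.
by apply/eqP/hc/mem_allb/size_code.
Qed.

Lemma core E : is_3graph E -> free_of C5 E -> free_of J4 E ->
  tr5 1 2 3 \in E -> tr5 1 2 4 \in E -> tr5 1 3 4 \in E -> tr5 2 3 4 \in E ->
  complete_shadow E -> hiso E H4.
Proof.
move=> h3 hc5 hj4 k1 k2 k3 k4 hs.
have hK : checkK4 (bv E) by rewrite /checkK4 /bv /= k1 k2 k3 k4.
have hsz : size (bv E) = 10 by rewrite !size_map.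
have /allP /(_ _ (mem_allb hsz)) := bigcheckT.
rewrite hK (shB h3 hs) (freeB (L := C5L) _ _ h3 hc5) //;
  last by move=> e; rewrite /C5 !inE -!orbA.
rewrite (freeB (L := J4L) _ _ h3 hj4) //;
  last by move=> e; rewrite /J4 !inE -!orbA.
by case/hasP => p hp; apply: isoB.
Qed.

Lemma im3 (T U : finType) (h : T -> U) (a b c : T) :
  h @: [set a; b; c] = [set h a; h b; h c].
Proof. by rewrite imsetU imsetU1 !imset_set1. Qed.

Lemma card_tri (T : finType) (x y z : T) :
  x != y -> x != z -> y != z -> #|[set x; y; z]| = 3.
Proof.
move=> xy xz yz.
have -> : [set x; y; z] = x |: (y |: [set z]) by apply/setP => w; rewrite !inE orbA.
by rewrite !cardsU1 cards1 !inE negb_or xy xz yz.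
Qed.

Theorem lemma2p14 (V : finType) (E : {set {set V}}) :
  #|V| = 5 ->
  is_3graph E ->
  free_of C5 E ->
  free_of J4 E ->
  contains_copy K43 E ->
  complete_shadow E ->
  hiso E H4.
Proof.
move=> hV h3 hc5 hj4 [f [finj fK]] hs.
have [v vf] : exists v, v \notin f @: [set: 'I_4].
  case: (pickP (fun v => v \notin f @: [set: 'I_4])) => [v hv|H]; first by exists v.
  have : #|V| <= #|f @: [set: 'I_4]|.
    by apply/subset_leq_card/subsetP => w _; move: (H w) => /negbFE.
  by rewrite card_imset // cardsT card_ord hV.
pose g (i : 'I_5) : V := if i < 4 then f (inord i) else v.
have ginj : injective g.
  move=> i j; rewrite /g.
  case: ifP => hi; case: ifP => hj.
  - by move/finj/(congr1 val); rewrite /= !inordK // => /val_inj.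
  - by move=> e; case/negP: vf; rewrite -e; apply: imset_f; rewrite inE.
  - by move=> e; case/negP: vf; rewrite e; apply: imset_f; rewrite inE.
  - move=> _; apply: val_inj; have := ltn_ord i; have := ltn_ord j.
    move: hi hj => /negbT hi /negbT hj; rewrite -!leqNgt in hi hj; move=> h1 h2; change (nat_of_ord i = nat_of_ord j); lia.
have : bijective g.
  by apply: (inj_card_bij ginj); rewrite card_ord hV.
case=> gi gK giK.
have ggi : forall e : {set V}, g @: (gi @: e) = e.
  move=> e; apply/setP => w; apply/imsetP/idP => [[u /imsetP[w' w'e ->] ->]|we].
    by rewrite giK.
  by exists (gi w); [apply: imset_f | rewrite giK].
pose E' := [set e : {set 'I_5} | g @: e \in E].
have h3' : is_3graph E'.
  by move=> e; rewrite inE => /h3; rewrite card_imset.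
have hF : forall (F : {set {set 'I_5}}), free_of F E -> free_of F E'.
  move=> F hF [h [hinj hh]]; apply: hF; exists (g \o h); split; first exact: inj_comp.
  by move=> e /hh; rewrite inE -imset_comp.
have hK : forall a b c : nat, a < b -> b < c -> c < 4 ->
    [set (inord a : 'I_5); inord b; inord c] \in E'.
  move=> a b c ab bc c4; rewrite inE im3 /g !inordK; try lia.
  have -> : a < 4 by lia. have -> : b < 4 by lia. rewrite c4.
  rewrite -(im3 f); apply: fK; rewrite inE card_tri //;
    rewrite -(inj_eq val_inj) /= !inordK; lia.
have hs' : complete_shadow E'.
  move=> x y xy; have : g x != g y by rewrite (inj_eq ginj).
  case/hs => e eE /andP[xe ye]; exists (gi @: e); first by rewrite inE ggi.
  by rewrite -[x]gK -[y]gK !imset_f.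
have := core h3' (hF _ hc5) (hF _ hj4) (hK 0 1 2 isT isT isT) (hK 0 1 3 isT isT isT)
  (hK 0 2 3 isT isT isT) (hK 1 2 3 isT isT isT) hs'.
case=> s [sbij hsE]; exists (s \o gi); split.
  by apply: bij_comp => //; exists g.
move=> e; have -> : (s \o gi) @: e = s @: (gi @: e) by rewrite -imset_comp.
by rewrite -hsE inE ggi.
Qed.
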